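(* Let $n,m,k$ be positive integers with $k\mid n$, let $p\in(0,1/2)$, and let $\mu_1,\dots,\mu_k\in\{0,1\}^m$ be fixed ground-truth mindsets. Let $V=V_1\sqcup\dots\sqcup V_k$ be a population with $|V_i|=n/k$, where every person $v\in V_i$ answers question $s\in\{1,\dots,m\}$ with $v(s)=\mu_i(s)$ with probability $1-p$ and $v(s)=1-\mu_i(s)$ with probability $p$, independently across persons and questions. Let $\mathcal P$ be the set of $m$ cuts $\{A_s^0,A_s^1\}$, $s=1,\dots,m$, where $A_s^y=\{v\in V: v(s)=y\}$. Let $a\in\mathbb N$ be the agreement parameter, and assume $p<1/(k+3)$ and $a\in\bigl(pn,\,(1-3p)n/k\bigr)$. Then: (1) The probability that at least one of the mindsets $\mu_i$ does not induce a $\mathcal P$-tangle is at most $k\,m\,\exp\!\bigl(-2n(ka/n-1+3p)^2/(9k)\bigr)$. (2) If the mindsets $\mu_1,\dots,\mu_k$ satisfy the non-degeneracy assumption, then the probability that there exists a $\mathcal P$-tangle which is not equal to any of $\mu_1,\dots,\mu_k$ is at most $k\,m\,\exp\!\bigl(-2n(a/n-p)^2/k\bigr)$. Both probabilities are over the random answers of the persons (the mindsets being fixed).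
   Context: An orientation of $\mathcal P$ chooses one side of every cut; it is identified with a vector $\tau\in\{0,1\}^m$ by choosing the side $A_s^{\tau(s)}$ of the cut for question $s$. For the agreement parameter $a$, an orientation $O$ is a $\mathcal P$-tangle (is consistent) if for all (not necessarily distinct) chosen sides $A,B,C\in O$ we have $|A\cap B\cap C|\ge a$. A mindset $\mu_i$ induces a tangle if the orientation corresponding to $\mu_i$ is a $\mathcal P$-tangle. Non-degeneracy assumption: whenever $\tau\in\{0,1\}^m$ has the property that for all $x,y,z\in\{1,\dots,m\}$ there exists a mindset $\mu_i$ with $\tau(x)=\mu_i(x)$, $\tau(y)=\mu_i(y)$ and $\tau(z)=\mu_i(z)$, then $\tau=\mu_j$ for some $j$. *)

(* Defs.v *)
From HB Require Import structures.
From mathcomp Require Import all_boot all_order all_algebra.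
From mathcomp Require Import reals sequences exp.
Set Implicit Arguments. Unset Strict Implicit. Unset Printing Implicit Defensive.
Import Order.TTheory GRing.Theory Num.Theory.
Local Open Scope ring_scope.

(* Persons are 'I_n, questions are 'I_m, groups are 'I_k.
   An outcome of the random experiment: the answer w (v, s) of person v to question s. *)
Definition answers (n m : nat) := {ffun 'I_n * 'I_m -> bool}.

Definition side (n m : nat) (w : answers n m) (s : 'I_m) (y : bool) : {set 'I_n} :=
  [set v | w (v, s) == y].

Definition is_tangle (n m : nat) (a : nat) (w : answers n m) (tau : 'I_m -> bool) : bool :=
  [forall x, [forall y, [forall z,
     (a <= #|side w x (tau x) :&: side w y (tau y) :&: side w z (tau z)|)%N]]].

Definition weight (R : realType) (n m k : nat) (p : R) (g : 'I_n -> 'I_k)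
    (mu : 'I_k -> {ffun 'I_m -> bool}) (w : answers n m) : R :=
  \prod_(vs : 'I_n * 'I_m) (if w vs == mu (g vs.1) vs.2 then 1 - p else p).

Definition Pr (R : realType) (n m k : nat) (p : R) (g : 'I_n -> 'I_k)
    (mu : 'I_k -> {ffun 'I_m -> bool}) (E : pred (answers n m)) : R :=
  \sum_(w | E w) weight p g mu w.

Definition non_degenerate (m k : nat) (mu : 'I_k -> {ffun 'I_m -> bool}) : Prop :=
  forall tau : {ffun 'I_m -> bool},
    (forall x y z : 'I_m, exists i : 'I_k,
        [/\ tau x = mu i x, tau y = mu i y & tau z = mu i z]) ->
    exists j : 'I_k, tau = mu j.

(* Main.v *)
Require Import Defs.
From HB Require Import structures.
From mathcomp Require Import all_boot all_order all_algebra.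
From mathcomp Require Import all_classical reals topology normedtype sequences derive realfun exp.
From mathcomp Require Import ring lra.
Set Implicit Arguments. Unset Strict Implicit. Unset Printing Implicit Defensive.
Import Order.TTheory GRing.Theory Num.Theory.
Import numFieldNormedType.Exports.
Local Open Scope ring_scope.

Section H.
Variable R : realType.
Variable p : R.
Hypothesis p0 : 0 <= p. Hypothesis p1 : p < 1.
Lemma ndecr0 (f df : R -> R) :
  (forall x : R, is_derive x (1:R) f (df x)) -> (forall x, 0 < x -> 0 <= df x) ->
  forall x, 0 <= x -> f 0 <= f x.
Proof.
move=> fd dfp x x0.
apply: (@ger0_derive1_ndecry R f 0) => //.
- move=> y; rewrite in_itv /= andbT => y0.
  by rewrite derive1E (@derive_val _ _ _ _ _ _ _ (fd y)); exact: dfp.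
- apply: continuous_subspaceT => r.
  apply/differentiable_continuous/derivable1_diffP.
  exact: (@ex_derive _ _ _ _ _ _ _ (fd r)).
Qed.
Let D (x : R) := 1 - p + p * expR x.
Lemma D_gt0 x : 0 < D x.
Proof. rewrite /D. have e : 0 <= p * expR x by rewrite mulr_ge0 // expR_ge0. move: p1; rewrite -subr_gt0 => h. exact: ltr_wpDr. Qed.

Lemma dD x : is_derive x (1:R) D (p * expR x).
Proof. by apply: is_derive_eq; rewrite add0r mul1r. Qed.

Lemma dDV x : is_derive x (1:R) (fun y => (D y)^-1) (- (D x)^-2 *: (p * expR x)).
Proof. apply: is_deriveV; [exact: lt0r_neq0 (D_gt0 x) | exact: dD]. Qed.

Let F1 x := p + x / 4 - 1 + (1 - p) * (D x)^-1.
Lemma dF1 x : is_derive x (1:R) F1 (4^-1 + (1 - p) * (- (D x)^-2 *: (p * expR x))).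
Proof.
have := dDV x => H.
apply: is_derive_eq.
by rewrite scaler0 !add0r mul1r subr0 -[4^-1%:A]/(4^-1 * 1) mulr1.
Qed.

Lemma F1_ge0 x : 0 <= x -> 0 <= F1 x.
Proof.
move=> x0.
have -> : 0 = F1 0 by rewrite /F1 /D expR0 mulr1 subrK mul0r invr1 mulr1 addr0; ring.
apply: (ndecr0 dF1) => // y y0.
set A := 1 - p; set B := p * expR y.
have DAB : D y = A + B by [].
have A0 : 0 < A by rewrite /A subr_gt0.
have B0 : 0 <= B by rewrite /B mulr_ge0 // expR_ge0.
have Dp : 0 < D y by exact: D_gt0.
rewrite -[(- _ *: B)]/(- D y ^- 2 * B).
have Dn : A + B != 0 by rewrite -DAB lt0r_neq0.
have -> : 4^-1 + A * (- D y ^- 2 * B) = (4^-1 * (A-B)^+2) / D y ^+ 2.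
  by rewrite DAB; field.
apply: divr_ge0; last by rewrite sqr_ge0.
apply: mulr_ge0; last by rewrite sqr_ge0.
by rewrite invr_ge0.
Qed.

Lemma hoeff_lemma x : 0 <= x -> D x <= expR (p * x + x ^+ 2 / 8).
Proof.
move=> x0.
pose G y := p * y + y ^+ 2 / 8 - (@ln R \o D) y.
have dl y : is_derive y (1:R) (@ln R \o D) ((D y)^-1 * (p * expR y)).
  exact: (is_derive1_comp (is_derive1_ln (D_gt0 y)) (dD y)).
have dG y : is_derive y (1:R) G (F1 y).
  have := dl y => H.
  apply: is_derive_eq.
  rewrite -[p%:A]/(p*1) -[y%:A]/(y*1) scaler0 add0r -[8^-1 *: _]/(8^-1 * (y * 1 + y * 1)).
  have Dn : D y != 0 by exact: lt0r_neq0 (D_gt0 y).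
  move: Dn; rewrite /F1 /D => Dn.
  by field.
have G0 : G 0 = 0.
  by rewrite /G /= /D expR0 mulr1 subrK ln1; ring.
have := ndecr0 dG (fun y y0 => F1_ge0 (ltW y0)) x0.
rewrite G0 /G /= subr_ge0 => h.
rewrite -(lnK (D_gt0 x)) ler_expR.
exact: h.
Qed.
End H.

Section Chernoff.
Variable R : realType.

Lemma chernoff_prod (I : finType) (c : I -> bool) (S : {set I}) (p t : R) :
  0 <= p -> p < 1 -> (0 < #|S|)%N -> #|S|%:R * p <= t ->
  \sum_(w : {ffun I -> bool} | t <= #|[set x in S | w x != c x]|%:R)
      \prod_(x : I) (if w x == c x then 1 - p else p)
  <= expR (- (2 * (t - #|S|%:R * p) ^+ 2) / #|S|%:R).
Proof.
move=> p0 p1 S0 tN.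
set N : R := #|S|%:R.
have N0 : 0 < N by rewrite /N ltr0n.
set u := t - N * p.
have u0 : 0 <= u by rewrite /u subr_ge0.
set l := 4 * u / N.
have l0 : 0 <= l by rewrite /l divr_ge0 ?mulr_ge0 // ltW.
have wge0 (w : {ffun I -> bool}) : 0 <= \prod_(x : I) (if w x == c x then 1 - p else p).
  apply: prodr_ge0 => x _; case: ifP => _ //; by rewrite subr_ge0 ltW.
pose X (w : {ffun I -> bool}) : R := #|[set x in S | w x != c x]|%:R.
apply: (@le_trans _ _ (\sum_(w : {ffun I -> bool})
    \prod_(x : I) (if w x == c x then 1 - p else p) * expR (l * (X w - t)))).
  rewrite [X in X <= _]big_mkcond /=; apply: ler_sum => w _.
  case: ifP => h.
    apply: ler_peMr => //; rewrite -expR0 ler_expR mulr_ge0 // subr_ge0 //.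
  by rewrite mulr_ge0 // expR_ge0.
pose h (x : I) (b : bool) : R := (if b == c x then 1 - p else p) *
   (if (x \in S) && (b != c x) then expR l else 1).
have stepB (w : {ffun I -> bool}) :
   \prod_(x : I) (if w x == c x then 1 - p else p) * expR (l * (X w - t))
   = expR (- (l * t)) * \prod_(x : I) h x (w x).
  rewrite /h big_split /= mulrCA; congr (_ * _).
  rewrite mulrBr addrC expRD; congr (_ * _).
  rewrite /X -sum1_card natr_sum big_mkcond /= mulr_sumr expR_sum.
  apply: eq_bigr => x _; rewrite !inE.
  by case: ifP => _; rewrite ?mulr1 ?mulr0 ?expR0.
under eq_bigr => w _ do rewrite stepB.
rewrite -mulr_sumr.
rewrite -(bigA_distr_bigA (fun x b => h x b)) /=.
have stepD x : \sum_(b : bool) h x b = if x \in S then 1 - p + p * expR l else 1.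
  rewrite big_bool /h /=.
  by case: (c x); case: (x \in S) => /=; rewrite !mulr1; ring.
under eq_bigr => x _ do rewrite stepD.
rewrite -big_mkcond /= prodr_const.
have Dle := hoeff_lemma p0 p1 l0.
have D0 : 0 <= 1 - p + p * expR l.
  by rewrite addr_ge0 ?mulr_ge0 ?expR_ge0 // subr_ge0 ltW.
apply: (@le_trans _ _ (expR (- (l * t)) * expR (p * l + l ^+ 2 / 8) ^+ #|S|)).
  rewrite ler_pM2l ?expR_gt0 //.
  by apply: lerXn2r => //; rewrite nnegrE ?expR_ge0.
rewrite -expRM_natl -expRD ler_expR -/N.
have tE : t = u + N * p by rewrite /u subrK.
rewrite tE /l.
have N0' : N != 0 by exact: lt0r_neq0.
rewrite le_eqVlt; apply/orP; left; apply/eqP.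
by field.
Qed.
End Chernoff.



Section Main.
Variable R : realType.

Lemma mem_pairS (T U : finType) (A : {set T}) (s : U) (v : T) (s' : U) :
  ((v, s') \in [set (x, s) | x in A]) = (v \in A) && (s' == s).
Proof.
apply/imsetP/andP => [[v' vA [-> ->]] | [vA /eqP ->]]; first by split.
by exists v.
Qed.

Definition Err (n m k : nat) (g : 'I_n -> 'I_k) (mu : 'I_k -> {ffun 'I_m -> bool})
  (i : 'I_k) (s : 'I_m) (w : answers n m) : {set 'I_n} :=
  [set v | (g v == i) && (w (v, s) != mu i s)].

Lemma prob_Err (n m k : nat) (p t : R) (g : 'I_n -> 'I_k)
    (mu : 'I_k -> {ffun 'I_m -> bool}) (i : 'I_k) (s : 'I_m) :
  0 <= p -> p < 1 -> (0 < #|[set v | g v == i]|)%N ->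
  #|[set v | g v == i]|%:R * p <= t ->
  Pr p g mu (fun w => t <= #|Err g mu i s w|%:R)
   <= expR (- (2 * (t - #|[set v | g v == i]|%:R * p) ^+ 2) / #|[set v | g v == i]|%:R).
Proof.
move=> p0 p1 c0 tN.
pose S := [set (v, s) | v in [set v | g v == i]].
have cS : #|S| = #|[set v | g v == i]| by apply: card_imset => v1 v2 [].
have cE (w : answers n m) : #|[set x in S | w x != mu (g x.1) x.2]| = #|Err g mu i s w|.
  rewrite -[RHS](card_imset _ (f := fun v => (v, s))); last by move=> v1 v2 [].
  apply: eq_card => -[v sq]; rewrite !inE /= !mem_pairS !inE.
  case: (sq =P s) => [->|]; rewrite ?andbT ?andbF //=.
  by case: (g v =P i) => [->|].

rewrite /Pr /weight.
rewrite (eq_bigl (fun w : answers n m => t <= #|[set x in S | w x != mu (g x.1) x.2]|%:R)); last first.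
  by move=> w; rewrite cE.
rewrite -cS.
apply: (@chernoff_prod R _ (fun x : 'I_n * 'I_m => mu (g x.1) x.2) S p t p0 p1); by rewrite cS.
Qed.


Lemma Pr_union (n m k : nat) (p : R) (g : 'I_n -> 'I_k)
    (mu : 'I_k -> {ffun 'I_m -> bool}) (J : finType)
    (E : pred (answers n m)) (F : J -> pred (answers n m)) :
  0 <= p -> p < 1 -> (forall w, E w -> exists j, F j w) ->
  Pr p g mu E <= \sum_(j : J) Pr p g mu (F j).
Proof.
move=> p0 p1 EF.
have W0 w : 0 <= weight p g mu w.
  apply: prodr_ge0 => x _; case: ifP => _ //; by rewrite subr_ge0 ltW.
rewrite /Pr.
under [X in _ <= X]eq_bigr => j _ do rewrite big_mkcond /=.
rewrite exchange_big /= big_mkcond /=.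
apply: ler_sum => w _.
case: ifP => Ew; last by apply: sumr_ge0 => j _; case: ifP.
have [j Fj] := EF w Ew.
rewrite (bigD1 j) //= Fj lerDl.
by apply: sumr_ge0 => j' _; case: ifP.
Qed.

Lemma card_U3 (T : finType) (A B C D : {set T}) :
  (#|A :|: B :|: C :|: D| <= #|A| + #|B| + #|C| + #|D|)%N.
Proof.
apply: leq_trans (leq_card_setU _ _).1 _; rewrite leq_add2r.
apply: leq_trans (leq_card_setU _ _).1 _; rewrite leq_add2r.
exact: (leq_card_setU _ _).1.
Qed.

End Main.

Unset Implicit Arguments.
Set Strict Implicit.

Theorem theorem1 (R : realType) (n m k : nat) (p : R) (a : nat)
    (g : 'I_n -> 'I_k) (mu : 'I_k -> {ffun 'I_m -> bool}) :
  (0 < n)%N -> (0 < m)%N -> (0 < k)%N -> (k %| n)%N ->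
  (forall i : 'I_k, #|[set v | g v == i]| = n %/ k)%N ->
  0 < p -> p < 1 / 2 -> p < 1 / (k%:R + 3) ->
  p * n%:R < a%:R -> a%:R < (1 - 3 * p) * n%:R / k%:R ->
  Pr p g mu (fun w => [exists i : 'I_k, ~~ is_tangle a w (mu i)])
    <= k%:R * m%:R *
       expR (- (2 * n%:R * (k%:R * a%:R / n%:R - 1 + 3 * p) ^+ 2) / (9 * k%:R))
  /\
  (non_degenerate mu ->
   Pr p g mu (fun w => [exists tau : {ffun 'I_m -> bool},
                          is_tangle a w tau && [forall i : 'I_k, tau != mu i]])
     <= k%:R * m%:R * expR (- (2 * n%:R * (a%:R / n%:R - p) ^+ 2) / k%:R)).
Proof.
move=> n0 m0 k0 kn cardV pp0 p12 pk h1 h2.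
have p0 : 0 <= p by exact: ltW.
have p1 : p < 1 by apply: lt_trans p12 _; rewrite ltr_pdivrMr // mul1r ltr1n.
set N := (n %/ k)%N.
have nR0 : (n%:R : R) != 0 by rewrite pnatr_eq0 -lt0n.
have kR0 : (k%:R : R) != 0 by rewrite pnatr_eq0 -lt0n.
have NR : (N%:R : R) = n%:R / k%:R by rewrite /N natf_div.
have N0 : (0 < N)%N by rewrite /N divn_gt0 // dvdn_leq.
have bound i s (t : R) : N%:R * p <= t ->
    Pr p g mu (fun w => t <= #|Err g mu i s w|%:R)
      <= expR (- (2 * (t - N%:R * p) ^+ 2) / N%:R).
  move=> tN; have := @prob_Err R n m k p t g mu i s p0 p1.
  by rewrite cardV; apply.
have kmR (B : R) : \sum_(j : 'I_k * 'I_m) B = k%:R * m%:R * B.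
  by rewrite sumr_const card_prod !card_ord -natrM mulr_natl.
split.
- pose t1 : R := (N%:R - a%:R) / 3.
  have t1N : N%:R * p <= t1.
    rewrite /t1 NR ler_pdivlMr // -subr_ge0.
    have -> : n%:R / k%:R - a%:R - n%:R / k%:R * p * 3 = (1 - 3 * p) * n%:R / k%:R - a%:R :> R by ring.
    by rewrite subr_ge0 ltW.
  apply: le_trans (@Pr_union R n m k p g mu _ _
     (fun j w => t1 <= #|Err g mu j.1 j.2 w|%:R) p0 p1 _) _.
    move=> w /existsP [i nt].
    case: (boolP [exists s, t1 <= #|Err g mu i s w|%:R]) => [/existsP [s hs] | /existsPn hall].
      by exists (i, s).
    exfalso; move/negP: nt; apply.
    apply/forallP => x; apply/forallP => y; apply/forallP => z.
    set I := side w x (mu i x) :&: side w y (mu i y) :&: side w z (mu i z).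
    have lt s : #|Err g mu i s w|%:R < t1 by rewrite ltNge; exact: hall s.
    have sub : [set v | g v == i] \subset
        I :|: Err g mu i x w :|: Err g mu i y w :|: Err g mu i z w.
      apply/fintype.subsetP => v; rewrite !inE => /eqP gv; rewrite gv eqxx /=.
      by case: eqP; case: eqP; case: eqP.
    have := leq_trans (subset_leq_card sub) (card_U3 _ _ _ _).
    rewrite cardV -/N => hN.
    have hNR : (N%:R : R) <= #|I|%:R + #|Err g mu i x w|%:R + #|Err g mu i y w|%:R
         + #|Err g mu i z w|%:R by rewrite -!natrD ler_nat.
    have := lt x; have := lt y; have := lt z.
    rewrite /t1 => lz ly lx.
    have : (a%:R : R) < #|I|%:R.
      lra.
    by rewrite ltr_nat => /ltnW.
  rewrite -kmR; apply: ler_sum => j _.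
  apply: le_trans (bound _ _ _ t1N) _.
  rewrite le_eqVlt; apply/orP; left; apply/eqP; congr expR.
  rewrite /t1 NR; field.
  by rewrite kR0 nR0.
- move=> nd.
  pose t2 : R := a%:R / k%:R.
  have t2N : N%:R * p <= t2.
    rewrite /t2 NR mulrAC ler_pM2r ?invr_gt0 ?ltr0n // mulrC; exact: ltW.
  apply: le_trans (@Pr_union R n m k p g mu _ _
     (fun j w => t2 <= #|Err g mu j.1 j.2 w|%:R) p0 p1 _) _.
    move=> w /existsP [tau /andP [tt /forallP hne]].
    case: (boolP [exists i, exists s, t2 <= #|Err g mu i s w|%:R]) =>
        [/existsP [i /existsP [s hs]] | /existsPn hall].
      by exists (i, s).
    exfalso.
    have [x [y [z hxyz]]] : exists x y z, forall i,
        ~~ [&& tau x == mu i x, tau y == mu i y & tau z == mu i z].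
      case: (boolP [exists x, exists y, exists z, [forall i,
          ~~ [&& tau x == mu i x, tau y == mu i y & tau z == mu i z]]]).
        move=> /existsP [x /existsP [y /existsP [z /forallP H]]].
        by exists x, y, z.
      move=> /existsPn H.
      have [j tj] : exists j, tau = mu j.
        apply: nd => x y z.
        move: (H x) => /existsPn /(_ y) /existsPn /(_ z) /forallPn [i].
        by rewrite negbK => /and3P [/eqP ? /eqP ? /eqP ?]; exists i.
      by move: (hne j); rewrite tj eqxx.
    pose s_ (i : 'I_k) := if tau x != mu i x then x
                          else if tau y != mu i y then y else z.
    have hs i : tau (s_ i) != mu i (s_ i).
      move: (hxyz i); rewrite /s_.
      case: (tau x =P mu i x) => hx /=; last by move=> _; apply/eqP.
      by case: (tau y =P mu i y) => hy /= //; move=> _; apply/eqP.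
    move/forallP: tt => /(_ x) /forallP /(_ y) /forallP /(_ z) hI.
    set I := side w x (tau x) :&: side w y (tau y) :&: side w z (tau z) in hI.
    have hsum : (#|I| <= \sum_(i : 'I_k) #|Err g mu i (s_ i) w|)%N.
      rewrite -sum1_card (partition_big g predT) //=.
      apply: leq_sum => i _.
      rewrite sum1dep_card; apply: subset_leq_card.
      apply/fintype.subsetP => v; rewrite !inE => /andP [vI /eqP gv].
      rewrite gv eqxx /=.
      move: vI (hs i); rewrite /s_ => /andP [/andP [/eqP hx /eqP hy] /eqP hz].
      by case: ifP => _; [rewrite hx | case: ifP => _; [rewrite hy | rewrite hz]].
    have lt i : #|Err g mu i (s_ i) w|%:R < t2.
      by rewrite ltNge; move: (hall i) => /existsPn /(_ (s_ i)).
    have : (#|I|%:R : R) < a%:R.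
      apply: (@le_lt_trans _ _ (\sum_(i : 'I_k) #|Err g mu i (s_ i) w|%:R)).
        by rewrite -natr_sum ler_nat.
      apply: (@lt_le_trans _ _ (\sum_(i : 'I_k) t2)).
        apply: ltr_sum => //; apply/hasP; exists (Ordinal k0) => //; exact: mem_index_enum.
      by rewrite sumr_const card_ord /t2 -[(a%:R / k%:R) *+ k]mulr_natr divfK.
    by rewrite ltr_nat ltnNge hI.
  rewrite -kmR; apply: ler_sum => j _.
  apply: le_trans (bound _ _ _ t2N) _.
  rewrite le_eqVlt; apply/orP; left; apply/eqP; congr expR.
  rewrite /t2 NR; field.
  by rewrite kR0 nR0.
Qed.
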